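(* Let $F=(C_1,\dots,C_m)$ be a flag of almost affine codes of length $n$, $E=\{1,\dots,n\}$, and let $r_i$ be the rank function of the matroid associated to $C_i$. Define $\eta_F=\sum_{i=1}^m(-1)^{m-i}r_i^*$, $\theta_F=\sum_{i=1}^m(-1)^{i+1}\overline{r_i}$, $\pi_F=\sum_{i=1}^m(-1)^{m-i}\overline{r_i^*}$, and $\rho_F=\sum_{i=1}^m(-1)^{i+1}r_i$. Then $(E,\eta_F)$, $(E,\theta_F)$ and $(E,\pi_F)$ are demi-matroids, and moreover $\theta_F=\overline{\rho_F}$; $\eta_F=\overline{\rho_F}$ if $m$ is even and $\eta_F=\rho_F^*$ if $m$ is odd; $\pi_F=\rho_F$ if $m$ is even and $\pi_F=(\overline{\rho_F})^*$ if $m$ is odd.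
   Context: An almost affine code over a finite alphabet $A$ of length $n$ and dimension $k$ is a subset $C\subseteq A^n$ with $|C|=|A|^k$ such that for every $X\subseteq E$, $\log_{|A|}|C_X|$ is a nonnegative integer ($C_X$ = projection onto coordinates $X$); its associated matroid has rank function $r(X)=\log_{|A|}|C_X|$. A flag of almost affine codes is a sequence $(C_1,\dots,C_m)$ of almost affine codes over the same alphabet and of the same length with each $C_{j+1}\subseteq C_j$ itself an almost affine code. A demi-matroid is $(E,r)$ with $r:2^E\to\mathbb{N}$, $r(\emptyset)=0$, and $r(X)\le r(X\cup\{x\})\le r(X)+1$. For any function $r$ on $2^E$: $r^*(X)=|X|+r(E\setminus X)-r(E)$ and $\overline{r}(X)=r(E)-r(E\setminus X)$. *)

(* Defs.v *)
From HB Require Import structures.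
From mathcomp Require Import all_boot all_order all_algebra.
Set Implicit Arguments. Unset Strict Implicit. Unset Printing Implicit Defensive.
Import Order.TTheory GRing.Theory Num.Theory.
Local Open Scope ring_scope.

(* Codes of length n over the finite alphabet A are sets of words
   w : {ffun 'I_n -> A}; coordinates E = 'I_n (i.e. {1..n} shifted to {0..n-1}). *)

Definition proj (A : finType) (n : nat) (C : {set {ffun 'I_n -> A}})
  (X : {set 'I_n}) : {set {ffun 'I_n -> option A}} :=
  [set [ffun i => if i \in X then Some (w i) else None] | w : {ffun 'I_n -> A} in C].

Definition almost_affine (A : finType) (n : nat) (C : {set {ffun 'I_n -> A}}) : Prop :=
  (exists k : nat, #|C| = (#|A| ^ k)%N) /\
  (forall X : {set 'I_n}, exists r : nat, #|proj C X| = (#|A| ^ r)%N).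

(* Rank function of the associated matroid: r(X) = log_{|A|} |C_X|
   (exact for almost affine codes). Valued in int for the alternating sums. *)
Definition code_rank (A : finType) (n : nat) (C : {set {ffun 'I_n -> A}})
  (X : {set 'I_n}) : int := (trunc_log #|A| #|proj C X|)%:Z.

Definition is_flag (A : finType) (n m : nat) (C : nat -> {set {ffun 'I_n -> A}}) : Prop :=
  (forall i, (1 <= i <= m)%N -> almost_affine (C i)) /\
  (forall i, (1 <= i < m)%N -> C i.+1 \subset C i).

Definition dual (n : nat) (r : {set 'I_n} -> int) (X : {set 'I_n}) : int :=
  (#|X|%:Z + r (~: X) - r setT).

Definition cobar (n : nat) (r : {set 'I_n} -> int) (X : {set 'I_n}) : int :=
  r setT - r (~: X).

Definition demi_matroid (n : nat) (r : {set 'I_n} -> int) : Prop :=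
  r set0 = 0 /\
  (forall X : {set 'I_n}, 0 <= r X) /\
  (forall (X : {set 'I_n}) (x : 'I_n), r X <= r (x |: X) <= r X + 1).

Section FlagFunctions.
Variables (A : finType) (n m : nat) (C : nat -> {set {ffun 'I_n -> A}}).

Definition rk (i : nat) : {set 'I_n} -> int := code_rank (C i).

Definition eta_F (X : {set 'I_n}) : int :=
  \sum_(1 <= i < m.+1) (-1) ^+ (m - i) * dual (rk i) X.
Definition theta_F (X : {set 'I_n}) : int :=
  \sum_(1 <= i < m.+1) (-1) ^+ (i.+1) * cobar (rk i) X.
Definition pi_F (X : {set 'I_n}) : int :=
  \sum_(1 <= i < m.+1) (-1) ^+ (m - i) * cobar (dual (rk i)) X.
Definition rho_F (X : {set 'I_n}) : int :=
  \sum_(1 <= i < m.+1) (-1) ^+ (i.+1) * rk i X.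
End FlagFunctions.

(* Main.v *)
Require Import Defs.
From HB Require Import structures.
From mathcomp Require Import all_boot all_order all_algebra.
From mathcomp Require Import zify ring lra.
Import Order.TTheory GRing.Theory Num.Theory.
Local Open Scope ring_scope.

Section Codes.
Variables (A : finType) (n : nat).
Implicit Types (C D : {set {ffun 'I_n -> A}}) (X Y : {set 'I_n}) (x : 'I_n).

Definition projf X (w : {ffun 'I_n -> A}) : {ffun 'I_n -> option A} :=
  [ffun i => if i \in X then Some (w i) else None].
Definition restr Y (g : {ffun 'I_n -> option A}) : {ffun 'I_n -> option A} :=
  [ffun i => if i \in Y then g i else None].

Lemma projE C X : proj C X = projf X @: C.
Proof. by []. Qed.

Lemma restr_proj x Y w : restr Y (projf (x |: Y) w) = projf Y w.
Proof.
apply/ffunP => i; rewrite !ffunE; case: (boolP (i \in Y)) => // iY.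
by rewrite in_setU1 iY orbT.
Qed.

Lemma proj_restr C x Y : restr Y @: proj C (x |: Y) = proj C Y.
Proof.
rewrite !projE -imset_comp; apply: eq_imset => w /=; exact: restr_proj.
Qed.

Lemma card_le1 C x Y : (#|proj C Y| <= #|proj C (x |: Y)|)%N.
Proof. rewrite -{1}(proj_restr C x Y); exact: leq_imset_card. Qed.

Lemma card_le2 C x Y : (#|proj C (x |: Y)| <= #|proj C Y| * #|A|)%N.
Proof.
pose h := fun p : {ffun 'I_n -> option A} * A =>
  [ffun i => if i == x then Some p.2 else p.1 i].
apply: (@leq_trans #|h @: setX (proj C Y) [set: A]|); last first.
  by rewrite (leq_trans (leq_imset_card _ _)) // cardsX cardsT.
apply: subset_leq_card; apply/subsetP => g /imsetP [w wC ->].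
apply/imsetP; exists (projf Y w, w x).
  by rewrite in_setX in_setT andbT projE imset_f.
apply/ffunP => i; rewrite !ffunE /=; case: eqP => [->|/eqP ix].
  by rewrite setU11.
by rewrite in_setU1 (negbTE ix).
Qed.

Definition Ppow C := forall X, exists r, #|proj C X| = (#|A| ^ r)%N.

Lemma rank_bounds C x Y r s : (1 < #|A|)%N -> #|proj C Y| = (#|A| ^ r)%N ->
  #|proj C (x |: Y)| = (#|A| ^ s)%N -> (r <= s <= r.+1)%N.
Proof.
move=> hA hr hs.
have h1 := card_le1 C x Y; have h2 := card_le2 C x Y.
rewrite hr hs -expnSr in h1 h2.
by rewrite -(leq_exp2l _ _ hA) h1 /= -(leq_exp2l _ _ hA) h2.
Qed.

Lemma rank_step C x Y : (1 < #|A|)%N -> Ppow C ->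
  0 <= code_rank C (x |: Y) - code_rank C Y <= 1.
Proof.
move=> hA hP; have [r hr] := hP Y; have [s hs] := hP (x |: Y).
have := @rank_bounds C x Y r s hA hr hs.
rewrite /code_rank hr hs !trunc_expnK //.
move: r s {hr hs}; clear; lia.
Qed.

Lemma rank_mono C D x Y : (1 < #|A|)%N -> Ppow C -> Ppow D -> D \subset C ->
  code_rank D (x |: Y) - code_rank D Y <= code_rank C (x |: Y) - code_rank C Y.
Proof.
move=> hA hC hD sDC.
have [r hr] := hC Y; have [r' hr'] := hC (x |: Y).
have [s hs] := hD Y; have [s' hs'] := hD (x |: Y).
have b1 := @rank_bounds C x Y r r' hA hr hr'; have b2 := @rank_bounds D x Y s s' hA hs hs'.
rewrite /code_rank hr hr' hs hs' !trunc_expnK //.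
have [err|nrr] := eqVneq r r'; last by move: b1 b2 nrr; clear; lia.
subst r'.
have hinj : {in proj C (x |: Y) &, injective (restr Y)}.
  by apply/imset_injP; rewrite proj_restr hr hr'.
have : #|proj D Y| = #|proj D (x |: Y)|.
  rewrite -(proj_restr D x Y) card_in_imset //.
  apply: sub_in2 hinj => g; rewrite !projE; apply/subsetP; exact: imsetS.
rewrite hs hs' => /eqP; rewrite eqn_exp2l // => /eqP ->.
by move: b1; clear; lia.
Qed.
End Codes.

Lemma sign_step (m : nat) : (-1) ^+ m.+2 = (if odd m then -1 else 1) :> int.
Proof. by rewrite -signr_odd /=; case: (odd m); rewrite ?negbK. Qed.

Lemma alt_sum (a : nat -> int) (m : nat) :
  (forall i, (1 <= i <= m)%N -> 0 <= a i <= 1) ->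
  (forall i, (1 <= i < m)%N -> a i.+1 <= a i) ->
  0 <= \sum_(1 <= i < m.+1) (-1) ^+ i.+1 * a i <= 1.
Proof.
suff: (forall i, (1 <= i <= m)%N -> 0 <= a i <= 1) ->
  (forall i, (1 <= i < m)%N -> a i.+1 <= a i) ->
  0 <= \sum_(1 <= i < m.+1) (-1) ^+ i.+1 * a i <= 1 /\
  ((0 < m)%N -> if odd m then a m <= \sum_(1 <= i < m.+1) (-1) ^+ i.+1 * a i
     else \sum_(1 <= i < m.+1) (-1) ^+ i.+1 * a i <= 1 - a m).
  by move=> H h1 h2; case: (H h1 h2).
elim: m => [|m IH] h1 h2.
  by rewrite big_geq.
have IH' := IH (fun i hi => h1 i (ltac:(move: hi; clear; lia)))
                (fun i hi => h2 i (ltac:(move: hi; clear; lia))).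
rewrite big_nat_recr //= sign_step.
have ha := h1 m.+1 (ltac:(clear; lia)).
have hm : (0 < m)%N -> a m.+1 <= a m by move=> hm0; apply: h2; lia.
have hm' : (0 < m)%N -> 0 <= a m <= 1 by move=> hm0; apply: h1; lia.
have hS0 : m = 0%N -> \sum_(1 <= i < m.+1) (-1) ^+ i.+1 * a i = 0.
  by move=> ->; rewrite big_geq.
have hodd : odd m -> (0 < m)%N by case: (m).
move: IH' ha hm hm' hS0 hodd.
set S := \sum_(1 <= i < m.+1) _.
case: (odd m) => /=; clear.
all: clearbody S; rewrite ?mulN1r ?mul1r; lia.
Qed.

Lemma demi_gen (n : nat) (f : {set 'I_n} -> int) : f set0 = 0 ->
  (forall X x, 0 <= f (x |: X) - f X <= 1) -> demi_matroid f.
Proof.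
move=> f0 hf; split => //; split; last first.
  move=> X x; have := hf X x; rewrite subr_ge0 lerBlDl addrC; by case/andP => -> ->.
suff H : forall k (X : {set 'I_n}), #|X| = k -> 0 <= f X by move=> X; exact: H _ _ erefl.
elim=> [|k IH] X hX.
  by move/eqP: hX; rewrite cards_eq0 => /eqP ->; rewrite f0.
have : (0 < #|X|)%N by rewrite hX.
rewrite card_gt0 => /set0Pn [x xX].
rewrite -(setD1K xX).
have h1 := IH (X :\ x) (ltac:(move: hX; rewrite (cardsD1 x) xX; clear; lia)).
have := hf (X :\ x) x; move: h1; clear; lia.
Qed.

Lemma demi_ext (n : nat) (f g : {set 'I_n} -> int) : f =1 g -> demi_matroid g -> demi_matroid f.
Proof.
move=> e [h0 [h1 h2]]; split; first by rewrite e.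
by split => [X|X x]; rewrite !e.
Qed.

Lemma setU1_idP (n : nat) (X : {set 'I_n}) x : x \in X -> x |: X = X.
Proof. by move=> xX; apply/setP => y; rewrite in_setU1; case: eqP => // ->. Qed.

Lemma split_compl (n : nat) (X : {set 'I_n}) x : x \notin X -> ~: X = x |: ~: (x |: X).
Proof.
move=> xX; apply/setP => y; rewrite !inE; case: eqP => [->|] //=.
Qed.

Lemma sgn_lemma (m i : nat) : (i <= m)%N -> (-1) ^+ (m - i) = - (-1) ^+ m * (-1) ^+ i.+1 :> int.
Proof.
move=> h; rewrite -signr_odd oddB // signr_addb !signr_odd exprS.
by rewrite mulN1r mulrN mulNr opprK.
Qed.

Lemma sum_sign (m : nat) : \sum_(1 <= i < m.+1) (-1) ^+ i.+1 = (odd m)%:Z :> int.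
Proof.
elim: m => [|m IH]; first by rewrite big_geq.
rewrite big_nat_recr //= IH sign_step; by case: (odd m).
Qed.

Lemma reindex (m : nat) (F : nat -> int) :
  \sum_(1 <= i < m.+1) (-1) ^+ (m - i) * F i = - (-1) ^+ m * \sum_(1 <= i < m.+1) (-1) ^+ i.+1 * F i.
Proof.
rewrite mulr_sumr; apply: eq_big_nat => i /andP[_ hi].
by rewrite sgn_lemma ?mulrA //; move: hi; clear; lia.
Qed.

Lemma cobar_dual (n : nat) (r : {set 'I_n} -> int) X :
  cobar (dual r) X = #|X|%:Z - r X + r set0.
Proof.
rewrite /cobar /dual setCT setCK cardsT card_ord.
have := cardsC X; rewrite card_ord => hc; rewrite -{1}hc.
rewrite PoszD; ring.
Qed.

Lemma dual_cobar (n : nat) (r : {set 'I_n} -> int) X :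
  dual (cobar r) X = #|X|%:Z - r X + r set0.
Proof. rewrite /cobar /dual setCT setCK; ring. Qed.

Lemma rk0 (A : finType) (n : nat) (C : {set {ffun 'I_n -> A}}) :
  (1 < #|A|)%N -> code_rank C set0 = 0.
Proof.
move=> hA; rewrite /code_rank.
have hc : (#|proj C set0| <= 1)%N.
  rewrite -(cards1 ([ffun _ => None] : {ffun 'I_n -> option A})); apply: subset_leq_card.
  apply/subsetP => g /imsetP [w _ ->]; rewrite inE; apply/eqP/ffunP => i.
  by rewrite !ffunE inE.
have /eqP -> // : trunc_log #|A| #|proj C set0| == 0%N.
rewrite trunc_log_eq0; apply/orP; right; move: hA hc; clear; lia.
Qed.

Theorem mainTheorem7 (A : finType) (n m : nat)
  (C : nat -> {set {ffun 'I_n -> A}})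
  (hA : (1 < #|A|)%N) (hF : is_flag m C) :
  demi_matroid (eta_F m C) /\ demi_matroid (theta_F m C) /\ demi_matroid (pi_F m C) /\
  (theta_F m C =1 cobar (rho_F m C)) /\
  (if ~~ odd m then eta_F m C =1 cobar (rho_F m C) else eta_F m C =1 dual (rho_F m C)) /\
  (if ~~ odd m then pi_F m C =1 rho_F m C else pi_F m C =1 dual (cobar (rho_F m C))).
Proof.
case: hF => hAA hsub.
have hP : forall i, (1 <= i <= m)%N -> @Ppow A n (C i) by move=> i /hAA [].
have rho0 : rho_F m C set0 = 0.
  by rewrite /rho_F big1 // => i _; rewrite /rk rk0 // mulr0.
have rho_incr : forall Y x, 0 <= rho_F m C (x |: Y) - rho_F m C Y <= 1.
  move=> Y x; rewrite /rho_F -sumrB.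
  under eq_bigr do rewrite -mulrBr.
  apply: alt_sum.
    by move=> i hi; apply: rank_step => //; apply: hP.
  move=> i /andP [h1 h2]; apply: rank_mono => //.
  - by apply: hP; move: h1 h2; clear; lia.
  - by apply: hP; move: h1 h2; clear; lia.
  - by apply: hsub; rewrite h1 h2.
set rho := rho_F m C in rho0 rho_incr *.
have demi_rho : demi_matroid rho by apply: demi_gen.
have demi_cobar : demi_matroid (cobar rho).
  apply: demi_gen; first by rewrite /cobar setC0 subrr.
  move=> X x; case: (boolP (x \in X)) => xX.
    by rewrite setU1_idP // subrr lexx ler01.
  rewrite /cobar (@split_compl _ _ _ xX); set Y := ~: (x |: X).
  have := rho_incr Y x; move: (rho (x |: Y)) (rho Y) (rho setT); clear; lia.
have demi_dual : demi_matroid (dual rho).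
  apply: demi_gen; first by rewrite /dual setC0 cards0 addrK.
  move=> X x; case: (boolP (x \in X)) => xX.
    by rewrite setU1_idP // subrr lexx ler01.
  rewrite /dual cardsU1 xX (@split_compl _ _ _ xX); set Y := ~: (x |: X).
  have := rho_incr Y x; move: (rho (x |: Y)) (rho Y) (rho setT) #|X|; clear; lia.
have demi_dc : demi_matroid (dual (cobar rho)).
  apply: demi_gen; first by rewrite dual_cobar cards0 rho0 /= ?subrr ?addr0 ?sub0r ?oppr0.
  move=> X x; rewrite !dual_cobar rho0.
  case: (boolP (x \in X)) => xX.
    by rewrite setU1_idP // !addr0 subrr lexx ler01.
  rewrite cardsU1 xX.
  have := rho_incr X x; move: (rho (x |: X)) (rho X) #|X|; clear; lia.
have eq_theta : theta_F m C =1 cobar rho.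
  move=> X; rewrite /theta_F /cobar /rho /rho_F -sumrB.
  by apply: eq_bigr => i _; rewrite mulrBr.
have eq_eta : forall X, eta_F m C X = - (-1) ^+ m * ((odd m)%:Z * #|X|%:Z + rho (~: X) - rho setT).
  move=> X; rewrite /eta_F /dual reindex; congr (_ * _).
  rewrite /rho /rho_F -sum_sign mulr_suml -big_split -sumrB /=.
  by apply: eq_bigr => i _; ring.
have eq_pi : forall X, pi_F m C X = - (-1) ^+ m * ((odd m)%:Z * #|X|%:Z - rho X).
  move=> X; rewrite /pi_F reindex; congr (_ * _).
  rewrite /rho /rho_F -sum_sign mulr_suml -sumrB /=.
  apply: eq_bigr => i _; rewrite cobar_dual /rk rk0 //; ring.
have hs : - (-1) ^+ m = (if odd m then 1 else -1) :> int.
  by rewrite -signr_odd; case: (odd m); rewrite /= ?opprK ?expr0.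
have E1 : if ~~ odd m then eta_F m C =1 cobar rho else eta_F m C =1 dual rho.
  case ho: (odd m) => /= X; rewrite eq_eta hs ho /cobar /dual /=; rewrite ?mul1r ?mul0r ?add0r ?mulN1r ?opprB //.
have E2 : if ~~ odd m then pi_F m C =1 rho else pi_F m C =1 dual (cobar rho).
  case ho: (odd m) => /= X; rewrite eq_pi hs ho ?dual_cobar ?rho0 /=; rewrite ?mul1r ?mul0r ?add0r ?mulN1r ?opprB ?opprK ?addr0 //.
split; last split; last split; last split => //.
- by case ho: (odd m) E1; rewrite /= => e; exact: (@demi_ext _ _ _ e).
- by exact: (@demi_ext _ _ _ eq_theta).
- by case ho: (odd m) E2; rewrite /= => e; exact: (@demi_ext _ _ _ e).
Qed.
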